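(* Let $\mathcal S$ be any set of collections $S=\{(y_d^1,\pi^1),\dots,(y_d^k,\pi^k)\}$ (with $y_d^t$ distinct elements of $\mathbb Y_d$ and $\pi^t\in\mathcal P_\Pi\cup\mathcal R_\Pi$). The program $\min\ c_1x+\eta$ subject to $x\in\mathcal X$ and, for each $S\in\mathcal S$, variables $y_c^S\ge0$, $y_d^S\in\mathbb Y_d$, $u^S$ with $\eta\ge c_{2,c}y_c^S+c_{2,d}y_d^S$, $B_{2,c}y_c^S+B_{2,d}y_d^S+Eu^S\ge d-B_1x$, $(u^S,\cdot)\in\mathcal{OU}(x,S)$, is a relaxation of the two-stage robust problem, and its optimal value is at most $w^*$.
   Context: $\mathcal X=\{x\in\mathbb R^{n_x}_+\times\mathbb Z^{m_x}_+: Ax\ge b\}$; $\mathcal U(x)=\{u\in\mathbb R^{n_u}_+: F(x)u\le h+Gx\}$, nonempty and bounded for $x\in\mathcal X$; $\mathcal Y(x,u)=\{(y_c,y_d)\in\mathbb R^{n_y}_+\times\mathbb Y_d: B_{2,c}y_c+B_{2,d}y_d\ge d-B_1x-Eu\}$, $\mathbb Y_d\subseteq\mathbb Z^{m_y}_+$ finite; $w^*=\min_{x\in\mathcal X}\big[c_1x+\max_{u\in\mathcal U(x)}\min_{(y_c,y_d)\in\mathcal Y(x,u)}(c_{2,c}y_c+c_{2,d}y_d)\big]$ (minimum over empty set $=+\infty$); standing assumption $\min\{c_1x+c_{2,c}y_c+c_{2,d}y_d: x\in\mathcal X,u\in\mathcal U(x),(y_c,y_d)\in\mathcal Y(x,u)\}>-\infty$.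 $\Pi=\{\pi\ge0: B_{2,c}^\intercal\pi\le c_{2,c}^\intercal\}$ with extreme points $\mathcal P_\Pi$ and extreme rays $\mathcal R_\Pi$. For $S=\{(y_d^t,\pi^t)\}_{t=1}^k$, $\mathcal{OU}(x,S)$ is the set of $(u,\hat\eta,\lambda,\mu)$ with: $\hat\eta\le c_{2,d}y_d^t+(d-B_1x-Eu-B_{2,d}y_d^t)^\intercal\pi^t$ ($\forall t$); $F(x)u\le h+Gx$; $F(x)^\intercal\lambda+\sum_tE^\intercal\pi^t\mu^t\ge0$; $\sum_t\mu^t=1$; $\mu^t(c_{2,d}y_d^t+(d-B_1x-Eu-B_{2,d}y_d^t)^\intercal\pi^t-\hat\eta)=0$ ($\forall t$); $\lambda\circ(h+Gx-F(x)u)=0$; $u\circ(F(x)^\intercal\lambda+\sum_tE^\intercal\pi^t\mu^t)=0$; $u,\lambda,\mu\ge0$ ($\circ$ componentwise product). *)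

(* Defs.v *)
From HB Require Import structures.
From mathcomp Require Import all_boot all_order all_algebra.
From mathcomp Require Import all_classical all_reals ereal.
Unset Strict Implicit. Unset Printing Implicit Defensive.
Import Order.TTheory GRing.Theory Num.Theory.
Local Open Scope ring_scope.
Local Open Scope classical_set_scope.

(* Data of the two-stage robust problem.
   x lives in R^(nx+mx): first nx coordinates continuous, last mx integral.
   p = #rows of A, q = #rows of F(x), r = #rows of the second-stage system. *)
Set Implicit Arguments.
Record tsro_data (R : realType) (nx mx nu ny my p q r : nat) := TSRO {
  tA : 'M[R]_(p, nx + mx);  tb : 'cV[R]_p;
  tF : 'cV[R]_(nx + mx) -> 'M[R]_(q, nu);  th : 'cV[R]_q;  tG : 'M[R]_(q, nx + mx);
  tB1 : 'M[R]_(r, nx + mx);  tE : 'M[R]_(r, nu);  td : 'cV[R]_r;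
  tB2c : 'M[R]_(r, ny);  tB2d : 'M[R]_(r, my);
  tc1 : 'rV[R]_(nx + mx);  tc2c : 'rV[R]_ny;  tc2d : 'rV[R]_my;
  tYd : seq 'cV[R]_my
}.
Unset Implicit Arguments.

Section Defs.
Context {R : realType} {nx mx nu ny my p q r : nat}.
Implicit Type P : tsro_data R nx mx nu ny my p q r.

Definition mxle {m n : nat} (M N : 'M[R]_(m, n)) : Prop := forall i j, M i j <= N i j.
Definition nnegmx {m n : nat} (M : 'M[R]_(m, n)) : Prop := mxle 0 M.
Definition sc (M : 'M[R]_1) : R := M 0 0.

Definition inX P (x : 'cV[R]_(nx + mx)) : Prop :=
  nnegmx x /\ (forall j : 'I_mx, x (rshift nx j) 0 \is a Num.nat) /\
  mxle (tb P) (tA P *m x).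

Definition inU P x (u : 'cV[R]_nu) : Prop :=
  nnegmx u /\ mxle (tF P x *m u) (th P + tG P *m x).

Definition inY P x u (yc : 'cV[R]_ny) (yd : 'cV[R]_my) : Prop :=
  nnegmx yc /\ yd \in tYd P /\
  mxle (td P - tB1 P *m x - tE P *m u) (tB2c P *m yc + tB2d P *m yd).

Definition cost2 P (yc : 'cV[R]_ny) (yd : 'cV[R]_my) : R :=
  sc (tc2c P *m yc) + sc (tc2d P *m yd).

(* second-stage value  max_{u in U(x)} min_{y in Y(x,u)} c2 y  (inf of empty = +oo) *)
Definition Qval P x : \bar R :=
  ereal_sup [set z | exists u, inU P x u /\
    z = ereal_inf [set z' | exists yc yd, inY P x u yc yd /\ z' = (cost2 P yc yd)%:E]].

Definition wstar P : \bar R :=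
  ereal_inf [set z | exists x, inX P x /\ z = ((sc (tc1 P *m x))%:E + Qval P x)%E].

Definition inPi P (pi : 'cV[R]_r) : Prop :=
  nnegmx pi /\ mxle ((tB2c P)^T *m pi) (tc2c P)^T.

Definition extreme_point_Pi P (pi : 'cV[R]_r) : Prop :=
  inPi P pi /\ forall p1 p2 (t : R), inPi P p1 -> inPi P p2 -> 0 < t < 1 ->
    pi = t *: p1 + (1 - t) *: p2 -> p1 = p2.

Definition recc_Pi P (v : 'cV[R]_r) : Prop :=
  nnegmx v /\ mxle ((tB2c P)^T *m v) 0.

Definition extreme_ray_Pi P (v : 'cV[R]_r) : Prop :=
  recc_Pi P v /\ v <> 0 /\ forall v1 v2, recc_Pi P v1 -> recc_Pi P v2 ->
    v = v1 + v2 -> exists a : R, 0 <= a /\ v1 = a *: v.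

Definition valid_coll P (S : seq ('cV[R]_my * 'cV[R]_r)) : Prop :=
  (0 < size S)%N /\ uniq (map fst S) /\
  forall z, z \in S -> z.1 \in tYd P /\ (extreme_point_Pi P z.2 \/ extreme_ray_Pi P z.2).

Definition inOU P x (S : seq ('cV[R]_my * 'cV[R]_r)) (u : 'cV[R]_nu) (eh : R)
    (lam : 'cV[R]_q) (mu : 'I_(size S) -> R) : Prop :=
  let yt (t : 'I_(size S)) := (nth (0, 0) S t).1 in
  let pit (t : 'I_(size S)) := (nth (0, 0) S t).2 in
  let val t := sc (tc2d P *m yt t) +
               sc ((td P - tB1 P *m x - tE P *m u - tB2d P *m yt t)^T *m pit t) in
  let grad := (tF P x)^T *m lam + \sum_(t < size S) mu t *: ((tE P)^T *m pit t) in
  let slack := th P + tG P *m x - tF P x *m u in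
  (forall t, eh <= val t) /\
  mxle (tF P x *m u) (th P + tG P *m x) /\
  nnegmx grad /\
  \sum_(t < size S) mu t = 1 /\
  (forall t, mu t * (val t - eh) = 0) /\
  (forall i, lam i 0 * slack i 0 = 0) /\
  (forall i, u i 0 * grad i 0 = 0) /\
  nnegmx u /\ nnegmx lam /\ (forall t, 0 <= mu t).


Definition relax_feas P (SS : set (seq ('cV[R]_my * 'cV[R]_r))) x (eta : R) : Prop :=
  forall S, SS S -> exists (yc : 'cV[R]_ny) (yd : 'cV[R]_my) (u : 'cV[R]_nu)
    (eh : R) (lam : 'cV[R]_q) (mu : 'I_(size S) -> R),
    nnegmx yc /\ yd \in tYd P /\ cost2 P yc yd <= eta /\
    mxle (td P - tB1 P *m x) (tB2c P *m yc + tB2d P *m yd + tE P *m u) /\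
    inOU P x S u eh lam mu.

Definition relax_val_at P SS x : \bar R :=
  ereal_inf [set z | exists eta, relax_feas P SS x eta /\
                                 z = (sc (tc1 P *m x) + eta)%:E].

Definition relax_val P SS : \bar R :=
  ereal_inf [set z | exists x eta, inX P x /\ relax_feas P SS x eta /\
                                   z = (sc (tc1 P *m x) + eta)%:E].

Definition standing P : Prop :=
  (-oo < ereal_inf [set z | exists x u yc yd, inX P x /\ inU P x u /\
      inY P x u yc yd /\ z = (sc (tc1 P *m x) + cost2 P yc yd)%:E])%E.

End Defs.

(* Main.v *)
Require Import Defs.
From HB Require Import structures.
From mathcomp Require Import all_boot all_order all_algebra.
From mathcomp Require Import all_classical all_reals ereal.
From mathcomp Require Import ring lra.
Import Order.TTheory GRing.Theory Num.Theory.
Local Open Scope ring_scope.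

Section FM.
Variable R : realType.

Definition dotv {n} (a x : 'rV[R]_n) : R := \sum_i a 0 i * x 0 i.

Inductive deriv n (rows : seq ('rV[R]_n * R)) : 'rV[R]_n -> R -> Prop :=
| dv_row a b : (a, b) \in rows -> deriv n rows a b
| dv_add a1 b1 a2 b2 : deriv n rows a1 b1 -> deriv n rows a2 b2 -> deriv n rows (a1 + a2) (b1 + b2)
| dv_scale k a b : 0 <= k -> deriv n rows a b -> deriv n rows (k *: a) (k * b)
| dv_weak a b b' : deriv n rows a b -> b <= b' -> deriv n rows a b'.
Arguments deriv {n}.
Arguments dv_row {n rows a b}. Arguments dv_add {n rows a1 b1 a2 b2}. Arguments dv_scale {n rows k a b}. Arguments dv_weak {n rows a b b'}.

Definition hdv {n} (a : 'rV[R]_n.+1) := a 0 ord0.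
Definition tlv {n} (a : 'rV[R]_n.+1) : 'rV[R]_n := \row_j a 0 (lift ord0 j).
Definition extv {n} (a : 'rV[R]_n) (x0 : R) : 'rV[R]_n.+1 :=
  \row_i (match unlift ord0 i with Some j => a 0 j | None => x0 end).

Lemma dot_split n (a : 'rV[R]_n.+1) x' x0 :
  dotv a (extv x' x0) = hdv a * x0 + dotv (tlv a) x'.
Proof.
rewrite /dotv big_ord_recl !mxE unlift_none; congr (_ + _).
by apply: eq_bigr => j _; rewrite !mxE liftK.
Qed.

Lemma extv_tl n (a : 'rV[R]_n.+1) : hdv a = 0 -> extv (tlv a) 0 = a.
Proof.
move=> h; apply/rowP => i; rewrite !mxE.
by case: unliftP => [j ->|->]; rewrite ?mxE.
Qed.

Lemma extvD n (a b : 'rV[R]_n) : extv (a + b) 0 = extv a 0 + extv b 0.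
Proof. by apply/rowP => i; rewrite !mxE; case: unlift => [j|]; rewrite ?mxE ?addr0. Qed.

Lemma extvZ n k (a : 'rV[R]_n) : extv (k *: a) 0 = k *: extv a 0.
Proof. by apply/rowP => i; rewrite !mxE; case: unlift => [j|]; rewrite ?mxE ?mulr0. Qed.

Lemma extv0 n : extv (0 : 'rV[R]_n) 0 = 0.
Proof. by apply/rowP => i; rewrite !mxE; case: unlift => [j|]; rewrite ?mxE. Qed.

Lemma tlvD n (a b : 'rV[R]_n.+1) : tlv (a + b) = tlv a + tlv b.
Proof. by apply/rowP => i; rewrite !mxE. Qed.

Lemma tlvZ n k (a : 'rV[R]_n.+1) : tlv (k *: a) = k *: tlv a.
Proof. by apply/rowP => i; rewrite !mxE. Qed.

Lemma dotvD n (a b x : 'rV[R]_n) : dotv (a + b) x = dotv a x + dotv b x.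
Proof. by rewrite /dotv -big_split; apply: eq_bigr => i _; rewrite !mxE mulrDl. Qed.

Lemma dotvZ n k (a x : 'rV[R]_n) : dotv (k *: a) x = k * dotv a x.
Proof. by rewrite /dotv mulr_sumr; apply: eq_bigr => i _; rewrite !mxE mulrA. Qed.

Lemma argmin (T : eqType) (s : seq T) (f : T -> R) : s != [::] ->
  exists2 p, p \in s & forall q, q \in s -> f p <= f q.
Proof.
elim: s => // a s IH _.
case: (eqVneq s [::]) => [->|/IH [p ps hp]].
  by exists a => [|q]; rewrite ?mem_seq1 ?inE // => /eqP ->.
case: (leP (f a) (f p)) => h.
  exists a; first by rewrite inE eqxx.
  move=> q; rewrite inE => /orP [/eqP ->//|/hp]; exact: le_trans.
exists p; first by rewrite inE ps orbT.
move=> q; rewrite inE => /orP [/eqP ->|/hp //]; exact: ltW.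
Qed.

Definition combv {n} (p m : 'rV[R]_n.+1 * R) : 'rV[R]_n * R :=
  (tlv ((- hdv m.1) *: p.1 + hdv p.1 *: m.1), (- hdv m.1) * p.2 + hdv p.1 * m.2).

Theorem fourier_motzkin n (rows : seq ('rV[R]_n * R)) :
  (forall x, exists2 r, r \in rows & r.2 < dotv r.1 x) -> deriv rows 0 (-1).
Proof.
elim: n rows => [|n IH] rows H.
  have [[a b] ab] := H 0; rewrite /= /dotv big_ord0 => b0.
  rewrite (thinmx0 a) in ab.
  have k0 : 0 <= - b^-1 by rewrite oppr_ge0 invr_le0 ltW.
  have := dv_scale k0 (dv_row ab); rewrite scaler0 mulNr mulVf ?lt_eqF //.
set Pos := [seq r <- rows | 0 < hdv r.1].
set Neg := [seq r <- rows | hdv r.1 < 0].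
set Z := [seq (tlv r.1, r.2) | r <- rows & hdv r.1 == 0].
set PN := [seq combv p m | p <- Pos, m <- Neg].
have lift_d : forall a b, deriv (Z ++ PN) a b -> deriv rows (extv a 0) b.
  move=> a b; elim => {a b}.
  - move=> a b; rewrite mem_cat => /orP [].
      case/mapP => r; rewrite mem_filter => /andP [/eqP h rin] [-> ->].
      by rewrite extv_tl //; apply: dv_row; rewrite -surjective_pairing.
    case/allpairsP => [[p m] [/= pin min [-> ->]]].
    move: pin min; rewrite !mem_filter => /andP [hp pin] /andP [hm min].
    rewrite extv_tl; last by rewrite /hdv !mxE; ring.
    apply: dv_add; apply: dv_scale.
    + by rewrite oppr_ge0 ltW.
    + by apply: dv_row; rewrite -surjective_pairing.
    + exact: ltW.
    + by apply: dv_row; rewrite -surjective_pairing.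
  - by move=> a1 b1 a2 b2 _ h1 _ h2; rewrite extvD; apply: dv_add.
  - by move=> k a b k0 _ h; rewrite extvZ; apply: dv_scale.
  - by move=> a b b' _ h hb; apply: dv_weak hb.
rewrite -(extv0 n); apply: lift_d; apply: IH => x'.
apply: contrapT => nv.
have sat : forall r, r \in Z ++ PN -> dotv r.1 x' <= r.2.
  move=> r rin; rewrite leNgt; apply/negP => lt; apply: nv; by exists r.
pose up (r : 'rV[R]_n.+1 * R) := (r.2 - dotv (tlv r.1) x') / hdv r.1.
have key : forall x0, (forall r, r \in Pos -> x0 <= up r) ->
    (forall r, r \in Neg -> up r <= x0) -> False.
  move=> x0 hP hN; have [r rin] := H (extv x' x0).
  rewrite dot_split ltNge => /negP; apply.
  case: (ltrgtP (hdv r.1) 0) => hr.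
  - have := hN r; rewrite mem_filter hr rin => /(_ erefl) h.
    have := ler_wnM2l (ltW hr) h; rewrite /up mulrCA divff ?lt_eqF // mulr1.
    by rewrite lerBrDr addrC.
  - have := hP r; rewrite mem_filter hr rin => /(_ erefl) h.
    have := ler_wpM2l (ltW hr) h; rewrite /up mulrCA divff ?gt_eqF // mulr1.
    by rewrite lerBrDr addrC.
  - rewrite hr mul0r add0r; have := sat (tlv r.1, r.2); apply; rewrite mem_cat; apply/orP; left.
    by apply/mapP; exists r => //; rewrite mem_filter hr eqxx.
have comb : forall p m, p \in Pos -> m \in Neg -> up m <= up p.
  move=> p m pin min; have := sat (combv p m).
  rewrite mem_cat allpairs_f // orbT => /(_ erefl).
  move: pin min; rewrite !mem_filter => /andP [hp _] /andP [hm _].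
  rewrite /combv /= tlvD !tlvZ dotvD !dotvZ => h.
  rewrite /up -subr_ge0.
  have hpm : 0 < hdv p.1 * - hdv m.1 by rewrite mulr_gt0 // oppr_gt0.
  rewrite -(pmulr_rge0 _ hpm).
  have -> : hdv p.1 * - hdv m.1 * ((p.2 - dotv (tlv p.1) x') / hdv p.1 -
     (m.2 - dotv (tlv m.1) x') / hdv m.1) =
     (- hdv m.1 * p.2 + hdv p.1 * m.2) - (- hdv m.1 * dotv (tlv p.1) x' + hdv p.1 * dotv (tlv m.1) x').
    have nzp : hdv p.1 != 0 by rewrite gt_eqF.
    have nzm : hdv m.1 != 0 by rewrite lt_eqF.
    by field; rewrite ?nzp ?nzm.
  by rewrite subr_ge0 -[X in _ <= X]/(combv p m).2; move: h; rewrite /combv /=.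
case: (eqVneq Pos [::]) => [P0|/(@argmin _ _ up) [p pin hp]].
  case: (eqVneq Neg [::]) => [N0|].
    by apply: (key 0) => r; rewrite ?P0 ?N0.
  move=> /(@argmin _ _ (fun r => - up r)) [m min hm].
  apply: (key (up m)) => r; first by rewrite P0.
  by move=> /hm; rewrite lerN2.
apply: (key (up p)) => [r /hp //|r rin].
exact: comb.
Qed.


Section Sums.
Variable T : finType.
Lemma sumMDl (f g h : T -> R) :
  \sum_t (f t + g t) * h t = \sum_t f t * h t + \sum_t g t * h t.
Proof. by rewrite -big_split; apply: eq_bigr => t _; rewrite mulrDl. Qed.
Lemma sumMZl k (f h : T -> R) : \sum_t (k * f t) * h t = k * \sum_t f t * h t.
Proof. by rewrite mulr_sumr; apply: eq_bigr => t _; rewrite mulrA. Qed.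
Lemma sum0l (h : T -> R) : \sum_t 0 * h t = 0.
Proof. by rewrite big1 // => t _; rewrite mul0r. Qed.
Lemma sum_delta (t0 : T) (h : T -> R) : \sum_t (t == t0)%:R * h t = h t0.
Proof.
rewrite (bigD1 t0) //= eqxx mul1r big1 ?addr0 // => t /negbTE ->.
by rewrite mul0r.
Qed.
Lemma sum_lin (a x y : T -> R) t :
  \sum_v a v * (x v - t * y v) = \sum_v a v * x v - t * \sum_v a v * y v.
Proof. by rewrite mulr_sumr -sumrB; apply: eq_bigr => v _; ring. Qed.
End Sums.

Lemma sum_swap (I V : finType) (f : I -> R) (g : V -> R) (A : I -> V -> R) :
  \sum_i f i * (\sum_v A i v * g v) = \sum_v g v * (\sum_i f i * A i v).
Proof.
under eq_bigr do rewrite mulr_sumr.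
rewrite exchange_big; apply: eq_bigr => v _; rewrite mulr_sumr.
by apply: eq_bigr => i _; ring.
Qed.

Section LP.
Variables (V I : finType) (A : I -> V -> R) (b : I -> R) (c : V -> R).

Local Notation W := (V + I)%type.
Local Notation n := #|{: V + I}|.

Definition mkr (f : W -> R) : 'rV[R]_n := \row_k f (enum_val k).

Lemma mkrE f w : mkr f 0 (enum_rank w) = f w.
Proof. by rewrite mxE enum_rankK. Qed.

Lemma dot_mkr f (x : 'rV[R]_n) : dotv (mkr f) x =
  \sum_v f (inl v) * x 0 (enum_rank (inl v)) + \sum_i f (inr i) * x 0 (enum_rank (inr i)).
Proof.
rewrite /dotv (reindex (@enum_rank W)) /=; last first.
  by exists enum_val => k _; rewrite ?enum_rankK ?enum_valK.
rewrite big_sumType /=; congr (_ + _); apply: eq_bigr => t _; by rewrite mkrE.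
Qed.

Definition row1 i : W -> R := fun w => match w with inl v => A i v | inr _ => 0 end.
Definition row2 v : W -> R := fun w => match w with inl _ => 0 | inr i => A i v end.
Definition row2n v : W -> R := fun w => match w with inl _ => 0 | inr i => - A i v end.
Definition row3 i0 : W -> R := fun w => match w with inl _ => 0 | inr i => - (i == i0)%:R end.
Definition row4 : W -> R := fun w => match w with inl v => - c v | inr i => b i end.

Definition lprows : seq ('rV[R]_n * R) :=
  [seq (mkr (row1 i), b i) | i <- enum I] ++
  [seq (mkr (row2 v), c v) | v <- enum V] ++
  [seq (mkr (row2n v), - c v) | v <- enum V] ++
  [seq (mkr (row3 i), 0) | i <- enum I] ++ [:: (mkr row4, 0)].

Definition Inv (a : 'rV[R]_n) (bb : R) := exists (al be : I -> R) (w : V -> R) (g : R),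
  [/\ (forall i, 0 <= al i /\ 0 <= be i), 0 <= g,
  (forall v, a 0 (enum_rank (inl v)) = \sum_i al i * A i v - g * c v),
  (forall i, a 0 (enum_rank (inr i)) = \sum_v w v * A i v - be i + g * b i) &
  \sum_i al i * b i + \sum_v w v * c v <= bb].

Lemma Inv_deriv a bb : deriv lprows a bb -> Inv a bb.
Proof.
elim => {a bb}.
- move=> a bb; rewrite !mem_cat => /or4P [| | |/orP []].
  + case/mapP => i _ [-> ->].
    exists (fun j => (j == i)%:R), (fun _ => 0), (fun _ => 0), 0; split; first (by move=> j; split; rewrite ?ler0n ?lexx); first by rewrite lexx.
    * by move=> v; rewrite mkrE sum_delta /=; ring.
    * by move=> j; rewrite mkrE sum0l /=; ring.
    * by rewrite sum_delta sum0l addr0.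
  + case/mapP => v0 _ [-> ->].
    exists (fun _ => 0), (fun _ => 0), (fun v => (v == v0)%:R), 0; split; first (by move=> j; split; rewrite ?ler0n ?lexx); first by rewrite lexx.
    * by move=> v; rewrite mkrE sum0l /=; ring.
    * by move=> j; rewrite mkrE sum_delta /=; ring.
    * by rewrite sum_delta sum0l add0r.
  + case/mapP => v0 _ [-> ->].
    exists (fun _ => 0), (fun _ => 0), (fun v => -1 * (v == v0)%:R), 0; split; first (by move=> j; split; rewrite ?ler0n ?lexx); first by rewrite lexx.
    * by move=> v; rewrite mkrE sum0l /=; ring.
    * by move=> j; rewrite mkrE sumMZl sum_delta /=; ring.
    * by rewrite sumMZl sum_delta sum0l add0r mulN1r.
  + case/mapP => i0 _ [-> ->].
    exists (fun _ => 0), (fun i => (i == i0)%:R), (fun _ => 0), 0; split; first (by move=> j; split; rewrite ?ler0n ?lexx); first by rewrite lexx.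
    * by move=> v; rewrite mkrE sum0l /=; ring.
    * by move=> j; rewrite mkrE sum0l /=; ring.
    * by rewrite !sum0l addr0.
  + rewrite inE => /eqP [-> ->].
    exists (fun _ => 0), (fun _ => 0), (fun _ => 0), 1; split; first (by move=> j; split; rewrite ?ler0n ?lexx); first by rewrite ler01.
    * by move=> v; rewrite mkrE sum0l /=; ring.
    * by move=> j; rewrite mkrE sum0l /=; ring.
    * by rewrite !sum0l addr0.
- move=> a1 b1 a2 b2 _ [al1 [be1 [w1 [g1 [hab1 hg1 e11 e12 s1]]]]]
    _ [al2 [be2 [w2 [g2 [hab2 hg2 e21 e22 s2]]]]].
  exists (fun i => al1 i + al2 i), (fun i => be1 i + be2 i), (fun v => w1 v + w2 v), (g1 + g2).
  split.
  + move=> i; have [? ?] := hab1 i; have [? ?] := hab2 i; by rewrite !addr_ge0.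
  + by rewrite addr_ge0.
  + by move=> v; rewrite mxE e11 e21 sumMDl; ring.
  + by move=> i; rewrite mxE e12 e22 sumMDl; ring.
  + by rewrite !sumMDl; lra.
- move=> k a bb k0 _ [al [be [w [g [hab hg e1 e2 s]]]]].
  exists (fun i => k * al i), (fun i => k * be i), (fun v => k * w v), (k * g).
  split.
  + move=> i; have [? ?] := hab i; by rewrite !mulr_ge0.
  + by rewrite mulr_ge0.
  + by move=> v; rewrite mxE e1 sumMZl; ring.
  + by move=> i; rewrite mxE e2 sumMZl; ring.
  + rewrite !sumMZl -mulrDr; exact: ler_wpM2l.
- move=> a bb bb' _ [al [be [w [g [hab hg e1 e2 s]]]]] h.
  exists al, be, w, g; split => //; exact: le_trans h.
Qed.


Hypothesis feas : exists z0 : V -> R, forall i, \sum_v A i v * z0 v <= b i.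
Hypothesis bnd : exists K, forall z : V -> R,
  (forall i, \sum_v A i v * z v <= b i) -> \sum_v c v * z v <= K.

Lemma Inv_false : ~ Inv 0 (-1).
Proof.
move=> [al [be [w [g [hab hg e1 e2 s]]]]].
have E1 : forall v, \sum_i al i * A i v = g * c v.
  by move=> v; have := e1 v; rewrite mxE; lra.
have E2 : forall i, \sum_v w v * A i v = be i - g * b i.
  by move=> i; have := e2 i; rewrite mxE; lra.
have iden : g * (\sum_i al i * b i + \sum_v w v * c v) = \sum_i al i * be i.
  have : g * \sum_v w v * c v = \sum_i al i * be i - g * \sum_i al i * b i.
    rewrite mulr_sumr.
    under eq_bigr do rewrite mulrCA -E1.
    rewrite -sum_swap.
    under eq_bigr do (under eq_bigr do rewrite mulrC; rewrite E2 mulrBr).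
    rewrite sumrB mulr_sumr; congr (_ - _); apply: eq_bigr => i _; ring.
  by rewrite mulrDr => ->; ring.
have albe : 0 <= \sum_i al i * be i.
  by apply: sumr_ge0 => i _; have [? ?] := hab i; rewrite mulr_ge0.
case: (ltrgtP g 0) => hg'.
- by move: hg; rewrite leNgt hg'.
- have : g * (\sum_i al i * b i + \sum_v w v * c v) <= g * (-1) by rewrite ler_wpM2l // ltW.
  rewrite iden => h; have := le_trans albe h.
  by rewrite mulrN1 oppr_ge0 leNgt hg'.
move: hg' E1 E2 => -> E1 E2.
have [z0 hz0] := feas; have [K hK] := bnd.
have alb : 0 <= \sum_i al i * b i.
  apply: (@le_trans _ _ (\sum_i al i * (\sum_v A i v * z0 v))).
    rewrite sum_swap; apply: sumr_ge0 => v _; rewrite E1 mul0r mulr0 //.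
  by apply: ler_sum => i _; have [? ?] := hab i; exact: ler_wpM2l.
have wc : \sum_v w v * c v <= -1 by lra.
pose t := `|K - \sum_v c v * z0 v| + 1.
have t0 : 0 <= t by rewrite addr_ge0 // normr_ge0.
pose zt v := z0 v - t * w v.
have : \sum_v c v * zt v <= K.
  apply: hK => i; rewrite sum_lin.
  have -> : \sum_v A i v * w v = be i.
    by rewrite -[RHS]subr0 -[X in _ - X](mul0r (b i)) -E2; apply: eq_bigr => v _; rewrite mulrC.
  have [_ ?] := hab i; have := hz0 i.
  have : 0 <= t * be i by rewrite mulr_ge0.
  lra.
rewrite sum_lin.
have -> : \sum_v c v * w v = \sum_v w v * c v by apply: eq_bigr => v _; rewrite mulrC.
have := ler_norm (K - \sum_v c v * z0 v).
have : t * (\sum_v w v * c v) <= t * (-1) by rewrite ler_wpM2l.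
rewrite /t; nra.
Qed.

Theorem lp_kkt : exists (z : V -> R) (y : I -> R),
  [/\ (forall i, \sum_v A i v * z v <= b i), (forall i, 0 <= y i),
      (forall v, \sum_i y i * A i v = c v) &
      (forall i, y i * (b i - \sum_v A i v * z v) = 0)].
Proof.
apply: contrapT => Hno; apply: Inv_false; apply: Inv_deriv.
apply: fourier_motzkin => x; apply: contrapT => Hx; apply: Hno.
have sat : forall r, r \in lprows -> dotv r.1 x <= r.2.
  by move=> r rin; rewrite leNgt; apply/negP => lt; apply: Hx; exists r.
pose z v := x 0 (enum_rank (inl v)); pose y i := x 0 (enum_rank (inr i)).
have S1 : forall i, \sum_v A i v * z v <= b i.
  move=> i; have := sat (mkr (row1 i), b i).
  rewrite /lprows !mem_cat map_f ?mem_enum // => /(_ erefl).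
  by rewrite dot_mkr /= sum0l addr0.
have S2 : forall v, \sum_i y i * A i v = c v.
  move=> v; apply/le_anti/andP; split.
    have := sat (mkr (row2 v), c v).
    rewrite /lprows !mem_cat map_f ?mem_enum ?orbT // => /(_ erefl).
    rewrite dot_mkr /= sum0l add0r => h; apply: le_trans h.
    by rewrite le_eqVlt; apply/orP; left; apply/eqP; apply: eq_bigr => i _; rewrite mulrC.
  have := sat (mkr (row2n v), - c v).
  rewrite /lprows !mem_cat map_f ?mem_enum ?orbT // => /(_ erefl).
  rewrite dot_mkr /= sum0l add0r.
  under eq_bigr do rewrite mulNr mulrC.
  by rewrite sumrN lerN2.
have S3 : forall i, 0 <= y i.
  move=> i0; have := sat (mkr (row3 i0), 0).
  rewrite /lprows !mem_cat map_f ?mem_enum ?orbT // => /(_ erefl).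
  rewrite dot_mkr /= sum0l add0r.
  under eq_bigr do rewrite mulNr.
  by rewrite sumrN sum_delta oppr_le0.
have S4 : \sum_i b i * y i <= \sum_v c v * z v.
  have := sat (mkr row4, 0).
  rewrite /lprows !mem_cat inE eqxx !orbT => /(_ erefl).
  rewrite dot_mkr /=.
  under eq_bigr do rewrite mulNr.
  by rewrite sumrN addrC subr_le0.
exists z, y; split => // i.
have tot : \sum_i y i * (b i - \sum_v A i v * z v) = 0.
  apply/le_anti/andP; split; last first.
    by apply: sumr_ge0 => j _; rewrite mulr_ge0 // subr_ge0.
  under eq_bigr do rewrite mulrBr.
  rewrite sumrB sum_swap.
  under [X in _ - X <= _]eq_bigr do rewrite S2.
  rewrite subr_le0.
  have -> : \sum_i y i * b i = \sum_i b i * y i by apply: eq_bigr => j _; rewrite mulrC.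
  have -> : \sum_v z v * c v = \sum_v c v * z v by apply: eq_bigr => j _; rewrite mulrC.
  exact: S4.
apply: (psumr_eq0P _ tot) => // j _; by rewrite mulr_ge0 // subr_ge0.
Qed.

End LP.

End FM.

Section App.
Variables (R : realType) (nx mx nu ny my p q r : nat).
Variables (P : tsro_data R nx mx nu ny my p q r) (x : 'cV[R]_(nx + mx)).
Variable (S : seq ('cV[R]_my * 'cV[R]_r)).

Definition yt (t : 'I_(size S)) := (nth (0, 0) S t).1.
Definition pit (t : 'I_(size S)) := (nth (0, 0) S t).2.
Definition ET t : 'cV[R]_nu := (tE P)^T *m pit t.
Definition Kt t := sc (tc2d P *m yt t) + sc ((td P - tB1 P *m x - tB2d P *m yt t)^T *m pit t).

Lemma val_eq t (u : 'cV[R]_nu) :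
  sc (tc2d P *m yt t) + sc ((td P - tB1 P *m x - tE P *m u - tB2d P *m yt t)^T *m pit t)
  = Kt t - \sum_j u j 0 * ET t j 0.
Proof.
rewrite /Kt /sc.
have -> : td P - tB1 P *m x - tE P *m u - tB2d P *m yt t =
  (td P - tB1 P *m x - tB2d P *m yt t) - tE P *m u by rewrite addrAC.
rewrite linearB /= mulmxBl trmx_mul -mulmxA.
set X := (_^T *m pit t); set Y := (u^T *m _).
have -> : (X - Y) 0 0 = X 0 0 - Y 0 0 by rewrite !mxE.
rewrite addrA; congr (_ - _).
by rewrite /Y mxE /ET; apply: eq_bigr => j _; rewrite mxE.
Qed.

Definition Alp (i : ('I_(size S) + ('I_q + 'I_nu))%type) (v : ('I_nu + 'I_1)%type) : R :=
  match i, v with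
  | inl t, inl j => ET t j 0
  | inl t, inr _ => 1
  | inr (inl i'), inl j => tF P x i' j
  | inr (inl _), inr _ => 0
  | inr (inr j'), inl j => - (j == j')%:R
  | inr (inr _), inr _ => 0
  end.
Definition blp (i : ('I_(size S) + ('I_q + 'I_nu))%type) : R :=
  match i with inl t => Kt t | inr (inl i') => (th P + tG P *m x) i' 0 | inr (inr _) => 0 end.
Definition clp (v : ('I_nu + 'I_1)%type) : R := match v with inl _ => 0 | inr _ => 1 end.

Lemma sumV (f : ('I_nu + 'I_1)%type -> R) : \sum_v f v = \sum_j f (inl j) + f (inr ord0).
Proof. by rewrite big_sumType big_ord1. Qed.

Lemma rs_t t z : \sum_v Alp (inl t) v * z v = \sum_j ET t j 0 * z (inl j) + z (inr ord0).
Proof. by rewrite sumV /= mul1r. Qed.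
Lemma rs_F i z : \sum_v Alp (inr (inl i)) v * z v = \sum_j tF P x i j * z (inl j).
Proof. by rewrite sumV /= mul0r addr0. Qed.
Lemma rs_n j z : \sum_v Alp (inr (inr j)) v * z v = - z (inl j).
Proof.
rewrite sumV /= mul0r addr0.
under eq_bigr do rewrite mulNr.
by rewrite sumrN sum_delta.
Qed.
Lemma ds_j j (y : _ -> R) : \sum_i y i * Alp i (inl j) =
  \sum_t y (inl t) * ET t j 0 + \sum_i y (inr (inl i)) * tF P x i j - y (inr (inr j)).
Proof.
rewrite big_sumType big_sumType /= addrA; congr (_ + _).
under eq_bigr do rewrite mulrN.
rewrite sumrN; congr (- _).
under eq_bigr do rewrite eq_sym mulrC.
by rewrite sum_delta.
Qed.
Lemma ds_e (y : _ -> R) : \sum_i y i * Alp i (inr ord0) = \sum_t y (inl t).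
Proof.
rewrite big_sumType big_sumType /=.
under [X in _ + (X + _)]eq_bigr do rewrite mulr0.
under [X in _ + (_ + X)]eq_bigr do rewrite mulr0.
by rewrite !big1_eq !addr0; apply: eq_bigr => t _; rewrite mulr1.
Qed.

Lemma sum_ge_term (T : finType) (g : T -> R) t0 : (forall t, 0 <= g t) -> g t0 <= \sum_t g t.
Proof. by move=> h; rewrite (bigD1 t0) //= lerDl sumr_ge0. Qed.

Lemma kkt_exists : (exists u, inU P x u) ->
  (exists M : R, forall u, inU P x u -> forall i, `|u i 0| <= M) -> (0 < size S)%N ->
  exists u eh lam mu, inOU P x S u eh lam mu.
Proof.
move=> [u0 [u0n u0F]] [M hM] Spos.
have [] := @lp_kkt R _ _ Alp blp clp.
- exists (fun v => match v with inl j => u0 j 0 | inr _ =>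
      - \sum_t `|Kt t - \sum_j u0 j 0 * ET t j 0| end).
  case=> [t|[i|j]].
  + rewrite rs_t /=.
    have := sum_ge_term _ (fun t => `|Kt t - \sum_j u0 j 0 * ET t j 0|) t (fun _ => normr_ge0 _).
    have := ler_norm (- (Kt t - \sum_j u0 j 0 * ET t j 0)).
    rewrite normrN.
    have -> : \sum_j ET t j 0 * u0 j 0 = \sum_j u0 j 0 * ET t j 0.
      by apply: eq_bigr => j _; rewrite mulrC.
    lra.
  + by rewrite rs_F /=; have := u0F i 0; rewrite mxE.
  + by rewrite rs_n /= oppr_le0; have := u0n j 0; rewrite mxE.
- pose t0 : 'I_(size S) := Ordinal Spos.
  exists (`|Kt t0| + \sum_j `|ET t0 j 0| * M) => z hz.
  pose u : 'cV[R]_nu := \col_j z (inl j).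
  have uU : inU P x u.
    split.
      by move=> j o; rewrite ord1 !mxE; have := hz (inr (inr j)); rewrite rs_n oppr_le0.
    move=> i o; rewrite ord1; have := hz (inr (inl i)); rewrite rs_F /= mxE.
    move=> h; apply: le_trans h; rewrite mxE le_eqVlt; apply/orP; left; apply/eqP; apply: eq_bigr => j _; by rewrite mxE.
  have hu := hM u uU.
  rewrite sumV /= mul1r big1 ?add0r; last by move=> j _; rewrite mul0r.
  have := hz (inl t0); rewrite rs_t /=.
  have : - \sum_j ET t0 j 0 * z (inl j) <= \sum_j `|ET t0 j 0| * M.
    rewrite -sumrN; apply: ler_sum => j _.
    apply: (le_trans (ler_norm _)); rewrite normrN normrM ler_wpM2l //.
    by have := hu j; rewrite mxE.
  have := ler_norm (Kt t0); lra.
move=> z [y [hz hy hd hc]].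
pose u : 'cV[R]_nu := \col_j z (inl j).
pose lam : 'cV[R]_q := \col_i y (inr (inl i)).
exists u, (z (inr ord0)), lam, (fun t => y (inl t)).
have gradE : forall j, ((tF P x)^T *m lam + \sum_(t < size S) y (inl t) *: ((tE P)^T *m pit t)) j 0
    = y (inr (inr j)).
  move=> j; have := hd (inl j); rewrite ds_j /= => h.
  have e1 : ((tF P x)^T *m lam) j 0 = \sum_i y (inr (inl i)) * tF P x i j.
    by rewrite mxE; apply: eq_bigr => i _; rewrite !mxE mulrC.
  have e2 : (\sum_(t < size S) y (inl t) *: ((tE P)^T *m pit t)) j 0 =
      \sum_t y (inl t) * ET t j 0.
    by rewrite summxE; apply: eq_bigr => t _; rewrite mxE.
  rewrite mxE e1 e2; lra.
have valE : forall t : 'I_(size S), sc (tc2d P *m (nth (0, 0) S t).1) +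
    sc ((td P - tB1 P *m x - tE P *m u - tB2d P *m (nth (0, 0) S t).1)^T *m (nth (0, 0) S t).2)
    = Kt t - \sum_j u j 0 * ET t j 0 by move=> t; exact: val_eq.
have Fu : forall i, (tF P x *m u) i 0 = \sum_j tF P x i j * z (inl j).
  by move=> i; rewrite mxE; apply: eq_bigr => j _; rewrite mxE.
have uS : forall t, \sum_j u j 0 * ET t j 0 = \sum_j ET t j 0 * z (inl j).
  by move=> t; apply: eq_bigr => j _; rewrite mxE mulrC.
rewrite /inOU /=; split; [|split; [|split; [|split; [|split; [|split; [|split; [|split; [|split]]]]]]]].
- move=> t; rewrite valE uS; have := hz (inl t); rewrite rs_t /=; lra.
- move=> i o; rewrite ord1 Fu; have := hz (inr (inl i)); by rewrite rs_F.
- by move=> j o; rewrite ord1 [_ 0 j _]mxE gradE.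
- by have := hd (inr ord0); rewrite ds_e.
- move=> t; have := hc (inl t); rewrite rs_t /= valE uS.
  by rewrite opprD addrA.
- move=> i.
  have -> : (th P + tG P *m x - tF P x *m u) i 0 = (th P + tG P *m x) i 0 - (tF P x *m u) i 0.
    by rewrite [LHS]mxE; congr (_ + _); rewrite mxE.
  by rewrite Fu; have := hc (inr (inl i)); rewrite rs_F /= mxE [lam _ _]mxE.
- move=> j; rewrite gradE mxE mulrC; have := hc (inr (inr j)); by rewrite rs_n /= sub0r opprK.
  by move=> j o; rewrite ord1 mxE; have := hz (inr (inr j)); rewrite rs_n oppr_le0 mxE.
- by move=> i o; rewrite ord1 !mxE; apply: hy.
- by move=> t.
Qed.

End App.

Local Open Scope classical_set_scope.

Theorem corollary24 (R : realType) (nx mx nu ny my p q r : nat)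
  (P : tsro_data R nx mx nu ny my p q r)
  (SS : set (seq ('cV[R]_my * 'cV[R]_r)))
  (HYd : forall y, y \in tYd P -> forall i, y i 0 \is a Num.nat)
  (HU : forall x, inX P x ->
     (exists u, inU P x u) /\
     (exists M : R, forall u, inU P x u -> forall i, `|u i 0| <= M))
  (Hstand : standing P)
  (HSS : forall S, SS S -> valid_coll P S) :
  (forall x, inX P x ->
     (relax_val_at P SS x <= (sc (tc1 P *m x))%:E + Qval P x)%E) /\
  (relax_val P SS <= wstar P)%E.
Proof.
have part1 : forall x, inX P x ->
     (relax_val_at P SS x <= (sc (tc1 P *m x))%:E + Qval P x)%E.
  move=> x xX; have [Hne Hb] := HU x xX.
  have feas : forall e : R, (Qval P x < e%:E)%E -> relax_feas P SS x e.
    move=> e Qe S SSS.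
    have [Spos _] := HSS S SSS.
    have [u [eh [lam [mu hOU]]]] := @kkt_exists R _ _ _ _ _ _ _ _ P x S Hne Hb Spos.
    have uU : inU P x u.
      by case: hOU => _ [hF [_ [_ [_ [_ [_ [hu _]]]]]]]; split.
    have : (ereal_inf [set z' | exists yc yd, inY P x u yc yd /\ z' = (cost2 P yc yd)%:E]
             < e%:E)%E.
      apply: le_lt_trans Qe; apply: ereal_sup_ubound; by exists u.
    case/ereal_inf_lt => _ [yc [yd [[ycn [ydY hY]] ->]]]; rewrite lte_fin => ce.
    exists yc, yd, u, eh, lam, mu; split => //; split => //; split; first exact: ltW.
    split => // i j; have := hY i j; rewrite !mxE; lra.
  have key : forall e : R, (Qval P x < e%:E)%E ->
      (relax_val_at P SS x <= (sc (tc1 P *m x) + e)%:E)%E.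
    move=> e Qe; apply: ereal_inf_lbound; exists e; split => //; exact: feas.
  move: key; case: (Qval P x) => [Q| |] key.
  - rewrite -EFinD; apply/lee_addgt0Pr => eps eps0.
    rewrite -EFinD -addrA; apply: key; rewrite lte_fin; lra.
  - by rewrite addey // leey.
  - rewrite addeNy; move: key; case: (relax_val_at P SS x) => [a| |] key //.
    + have := key (a - sc (tc1 P *m x) - 1)%R (ltNyr _); rewrite lee_fin => h; suff : False by []; lra.
    + by have := key 0 (ltNyr _).
split => //.
apply: le_ereal_inf_tmp => _ [x [xX ->]].
apply: le_trans (part1 x xX).
apply: ereal_inf_le_tmp => _ [e [fe ->]]; by exists x, e.
Qed.
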